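(* Let $0<\rho<\frac{\pi}{6}$, set $\theta_1=0$, $\theta_2=\frac{\pi}{2}+\rho$, $T_1=[\theta_2,\pi]$ and $T_2=[2\rho,\frac{\pi}{2}-\rho]$, and for $p>0$ define $\Delta_p(\theta)=|\cos(\theta-\theta_2)|^p+|\cos(\theta-\theta_1)|^p$. Then: (a) For all $0<p\le 2$ and all $\theta\in T_1$, $\Delta_p(\theta)\ge 1$. (b) For all $0<p\le\frac{\log 3}{\log 2}$ and all $\theta_i\in T_1$, $\theta_j\in T_2$, $\Delta_p(\theta_i)+\Delta_p(\theta_j)\ge 2$. *)

(* Defs.v *)
From Stdlib Require Import Reals.
Open Scope R_scope.

(* x^p for x >= 0 and real exponent p > 0, with the convention 0^p = 0. *)
Definition rpow (x p : R) : R := if Req_EM_T x 0 then 0 else Rpower x p.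

Definition theta1 : R := 0.
Definition theta2 (rho : R) : R := PI / 2 + rho.

Definition Deltap (rho p theta : R) : R :=
  rpow (Rabs (cos (theta - theta2 rho))) p + rpow (Rabs (cos (theta - theta1))) p.

(* Main.v *)
Require Import Defs.
From Stdlib Require Import Reals Lra Lia Psatz.
Open Scope R_scope.

Lemma exp_le_mono (x y : R) : x <= y -> exp x <= exp y.
Proof. intros H. destruct (Rle_lt_or_eq_dec _ _ H) as [h|h].
  - left. now apply exp_increasing. - rewrite h; lra. Qed.

Lemma ln_le' (x y : R) : 0 < x -> x <= y -> ln x <= ln y.
Proof. intros H1 H2. destruct (Rle_lt_or_eq_dec _ _ H2) as [h|h].
  - left. now apply ln_increasing. - rewrite h; lra. Qed.

Lemma rpow_pos (x p : R) : 0 < x -> rpow x p = Rpower x p.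
Proof. intros H. unfold rpow. destruct (Req_EM_T x 0); [lra|reflexivity]. Qed.

Lemma Rpower_pos' (x p : R) : 0 < Rpower x p.
Proof. unfold Rpower. apply exp_pos. Qed.

Lemma bern_rev (y q : R) : 0 < y -> 0 <= q <= 1 -> Rpower y q <= 1 + q * (y - 1).
Proof.
  intros Hy Hq. unfold Rpower. set (L := ln y).
  assert (e1 := exp_ineq1_le ((1 - q) * L)).
  assert (e2 := exp_ineq1_le (- (q * L))).
  assert (E1 : exp ((1 - q) * L) * exp (q * L) = y).
  { rewrite <- exp_plus. replace ((1 - q) * L + q * L) with L by ring. unfold L. now apply exp_ln. }
  assert (E2 : exp (- (q * L)) * exp (q * L) = 1).
  { rewrite <- exp_plus. replace (- (q * L) + q * L) with 0 by ring. apply exp_0. }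
  assert (P := exp_pos (q * L)).
  assert (H1 : 0 <= q * (exp ((1 - q) * L) - (1 + (1 - q) * L)) * exp (q * L)).
  { apply Rmult_le_pos; [apply Rmult_le_pos|]; lra. }
  assert (H2 : 0 <= (1 - q) * (exp (- (q * L)) - (1 + - (q * L))) * exp (q * L)).
  { apply Rmult_le_pos; [apply Rmult_le_pos|]; lra. }
  rewrite <- E1. nra.
Qed.

Lemma Rpower_le_exp (x p q : R) : 0 < x <= 1 -> p <= q -> Rpower x q <= Rpower x p.
Proof.
  intros Hx Hpq. unfold Rpower. apply exp_le_mono.
  assert (ln x <= 0). { rewrite <- ln_1. apply ln_le'; lra. } nra.
Qed.

Lemma Rpower_sq (x : R) : 0 < x -> Rpower x 2 = x ^ 2.
Proof. intros H. replace 2 with (INR 2) by (simpl; lra). now apply Rpower_pow. Qed.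

Lemma Rpower_base1 (p : R) : Rpower 1 p = 1.
Proof. unfold Rpower. rewrite ln_1, Rmult_0_r. apply exp_0. Qed.

Definition p0 : R := ln 3 / ln 2.

Lemma ln2_pos : 0 < ln 2.
Proof. rewrite <- ln_1. apply ln_increasing; lra. Qed.

Lemma Rpower_2_p0 : Rpower 2 p0 = 3.
Proof. unfold Rpower, p0. assert (h := ln2_pos).
  replace (ln 3 / ln 2 * ln 2) with (ln 3) by (field; lra). apply exp_ln; lra. Qed.

Lemma Rpower_half_p0 : Rpower (1/2) p0 = 1/3.
Proof.
  assert (h := Rpower_mult_distr (1/2) 2 p0 ltac:(lra) ltac:(lra)).
  replace (1/2*2) with 1 in h by field. rewrite Rpower_base1, Rpower_2_p0 in h. lra.
Qed.

Lemma p0_bounds : 15849/10000 <= p0 <= 1585/1000.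
Proof.
  assert (h2 := ln2_pos).
  assert (L1 : ln (2 ^ 84) <= ln (3 ^ 53)).
  { apply ln_le'. apply pow_lt; lra.
    rewrite !pow_IZR. apply IZR_le. vm_compute. discriminate. }
  assert (L2 : ln (3 ^ 200) <= ln (2 ^ 317)).
  { apply ln_le'. apply pow_lt; lra.
    rewrite !pow_IZR. apply IZR_le. vm_compute. discriminate. }
  rewrite !ln_pow in L1, L2 by lra.
  replace (INR 84) with 84 in L1 by (rewrite INR_IZR_INZ; reflexivity).
  replace (INR 53) with 53 in L1 by (rewrite INR_IZR_INZ; reflexivity).
  replace (INR 200) with 200 in L2 by (rewrite INR_IZR_INZ; reflexivity).
  replace (INR 317) with 317 in L2 by (rewrite INR_IZR_INZ; reflexivity).
  unfold p0. split.
  - apply Rmult_le_reg_r with (ln 2); auto. replace (ln 3 / ln 2 * ln 2) with (ln 3) by (field; lra). lra.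
  - apply Rmult_le_reg_r with (ln 2); auto. replace (ln 3 / ln 2 * ln 2) with (ln 3) by (field; lra). lra.
Qed.

Lemma split_p0 (x : R) : 0 < x -> Rpower x (2 - p0) * Rpower x p0 = x ^ 2.
Proof. intros H. rewrite <- Rpower_plus. replace (2 - p0 + p0) with 2 by ring. now apply Rpower_sq. Qed.

Lemma Rpower_half_r : Rpower (1/2) (2 - p0) = 3/4.
Proof.
  unfold Rminus. rewrite Rpower_plus, Rpower_Ropp, Rpower_half_p0, Rpower_sq by lra. field.
Qed.

Lemma Gh (x : R) : 0 < x -> 4 * x ^ 2 <= 3 * (1 + (2 - p0) * (2 * x - 1)) * Rpower x p0.
Proof.
  intros Hx. pose proof p0_bounds as Hp.
  rewrite <- (split_p0 x Hx).
  assert (Hx2 : Rpower x (2 - p0) = 3/4 * Rpower (2*x) (2-p0)).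
  { rewrite <- Rpower_half_r, Rpower_mult_distr by lra. f_equal. field. }
  rewrite Hx2.
  assert (B := bern_rev (2 * x) (2 - p0) ltac:(lra) ltac:(lra)).
  assert (X := Rpower_pos' x p0).
  nra.
Qed.

Lemma G1 (x : R) : 0 < x -> x ^ 2 <= (1 + (2 - p0) * (x - 1)) * Rpower x p0.
Proof.
  intros Hx. pose proof p0_bounds as Hp.
  rewrite <- (split_p0 x Hx).
  assert (B := bern_rev x (2 - p0) ltac:(lra) ltac:(lra)).
  assert (X := Rpower_pos' x p0).
  nra.
Qed.

Lemma cub (S : R) : 0 <= S <= 37/100 -> 0 <= 24366/10000 - 7895/1000*S + 377/1000*S^2 + 996/100*S^3.
Proof. intros HS.
 assert (hb: -7895/1000 + 377/1000*(S+37/100) + 996/100*(S^2 + 37/100*S + (37/100)^2) <= 0) by nra.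
 assert (hm: 0 <= (37/100 - S) * -(-7895/1000 + 377/1000*(S+37/100) + 996/100*(S^2 + 37/100*S + (37/100)^2))) by nra.
 nra. Qed.

Lemma A2 (S r : R) : 0 <= S <= 37/100 -> 415/1000 <= r <= 4151/10000 ->
  0 <= -4 + 18*r - 6*r^2 - 24*S*r + 12*S*r^2 + 12*S^2 - 28*S^2*r + 24*S^3*r.
Proof. intros HS Hr.
 assert (h0: -4 + 18*r - 6*r^2 >= 24366/10000) by nra.
 assert (h1: - 24*r + 12*r^2 >= -7895/1000) by nra.
 assert (h2: 12 - 28*r >= 377/1000) by nra.
 assert (h3: 24 * r >= 996/100) by nra.
 pose proof (cub S HS).
 assert (S^2 >= 0) by nra. assert (S^3 >= 0) by (simpl; nra).
 assert (S*(- 24*r + 12*r^2) >= S*(-7895/1000)) by nra.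
 assert (S^2*(12 - 28*r) >= S^2*(377/1000)) by nra.
 assert (S^3*(24*r) >= S^3*(996/100)) by nra.
 nra. Qed.

Lemma Qpos (S r : R) : 37/100 <= S <= 1/2 -> 415/1000 <= r <= 4151/10000 ->
  0 <= 1 - 4*r + 3*r^2 + S*(4 - 14*r + 6*r^2) + S^2*(4 - 4*r) + 8*r*S^3.
Proof. intros HS Hr. 
 assert (h0: 1 - 4*r + 3*r^2 >= -1435/10000) by nra.
 assert (h1: 4 - 14*r + 6*r^2 >= -7776/10000) by nra.
 assert (h2: 4 - 4*r >= 23396/10000) by nra.
 assert (h3: 8*r >= 332/100) by nra.
 assert (S*(4 - 14*r + 6*r^2) >= S*(-7776/10000)) by nra.
 assert (S^2*(4 - 4*r) >= S^2*(23396/10000)) by nra.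
 assert (S^3 >= 0) by (simpl; nra). assert (S^2>=0) by nra.
 assert (S^3*(8*r) >= S^3*(332/100)) by nra.
 assert (hb: -7776/10000 + 23396/10000*(S+37/100) + 332/100*(S^2 + 37/100*S + (37/100)^2) >= 0) by nra.
 assert (hm: 0 <= (S - 37/100) * (-7776/10000 + 23396/10000*(S+37/100) + 332/100*(S^2 + 37/100*S + (37/100)^2))) by nra.
 nra. Qed.

Lemma F2poly (S : R) : 0 < S <= 1/2 ->
  Rpower (1 - 2 * S * S) p0 + 2 * Rpower S p0 >= 1.
Proof.
  intros HS. pose proof p0_bounds as Hp. set (r := 2 - p0).
  assert (Hr : 415/1000 <= r <= 4151/10000) by (unfold r; lra).
  set (w := 1 - 2 * S * S).
  assert (Hw : 1/2 <= w < 1) by (unfold w; nra).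
  set (W := Rpower w p0). set (Z := Rpower S p0).
  assert (HZ := Gh S ltac:(lra)). fold Z in HZ. fold r in HZ.
  assert (HW0 : 0 < W) by apply Rpower_pos'.
  assert (HZ0 : 0 < Z) by apply Rpower_pos'.
  assert (dS : 0 < 1 + r * (2 * S - 1)) by nra.
  destruct (Rle_lt_dec S (37/100)) as [HS1|HS1].
  - assert (HW := G1 w ltac:(lra)). fold W in HW. fold r in HW.
    assert (d1 : 0 < 1 + r * (w - 1)) by nra.
    assert (P := A2 S r ltac:(lra) Hr).
    assert (E : w^2*3*(1 + r*(2*S-1)) + 8*S^2*(1 + r*(w-1)) - 3*(1 + r*(w-1))*(1 + r*(2*S-1))
              = S^2 * (-4 + 18*r - 6*r^2 - 24*S*r + 12*S*r^2 + 12*S^2 - 28*S^2*r + 24*S^3*r))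
      by (unfold w; ring).
    assert (0 <= S^2 * (-4 + 18*r - 6*r^2 - 24*S*r + 12*S*r^2 + 12*S^2 - 28*S^2*r + 24*S^3*r)) by nra.
    assert (K : 3 * (1 + r * (w - 1)) * (1 + r * (2 * S - 1)) * (W + 2 * Z - 1) >= 0).
    { assert (k1 : 3 * (1 + r*(2*S-1)) * (w^2) <= 3 * (1 + r*(2*S-1)) * ((1 + r * (w - 1)) * W)) by
        (apply Rmult_le_compat_l; nra).
      assert (k2 : 2 * (1 + r*(w-1)) * (4 * S^2) <= 2 * (1 + r*(w-1)) * (3 * (1 + r * (2 * S - 1)) * Z)) by
        (apply Rmult_le_compat_l; nra).
      nra. }
    assert (0 < 3 * (1 + r * (w - 1)) * (1 + r * (2 * S - 1))) by nra.
    destruct (Rle_or_lt 1 (W + 2 * Z)); [lra|]. nra.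
  - assert (HW := Gh w ltac:(lra)). fold W in HW. fold r in HW.
    assert (d1 : 0 < 1 + r * (2 * w - 1)) by nra.
    assert (P := Qpos S r ltac:(lra) Hr).
    assert (E : 4*w^2*(1+r*(2*S-1))+8*S^2*(1+r*(2*w-1))-3*(1+r*(2*w-1))*(1+r*(2*S-1))
              = (2*S-1)^2 * (1 - 4*r + 3*r^2 + S*(4 - 14*r + 6*r^2) + S^2*(4 - 4*r) + 8*r*S^3))
      by (unfold w; ring).
    assert (0 <= (2*S-1)^2 * (1 - 4*r + 3*r^2 + S*(4 - 14*r + 6*r^2) + S^2*(4 - 4*r) + 8*r*S^3)) by (apply Rmult_le_pos; [apply pow2_ge_0|lra]).
    assert (K : 3 * (1 + r * (2*w - 1)) * (1 + r * (2 * S - 1)) * (W + 2 * Z - 1) >= 0).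
    { assert (k1 : (1 + r*(2*S-1)) * (4 * w^2) <= (1 + r*(2*S-1)) * (3 * (1 + r * (2*w - 1)) * W)) by
        (apply Rmult_le_compat_l; nra).
      assert (k2 : 2 * (1 + r*(2*w-1)) * (4 * S^2) <= 2 * (1 + r*(2*w-1)) * (3 * (1 + r * (2 * S - 1)) * Z)) by
        (apply Rmult_le_compat_l; nra).
      nra. }
    assert (0 < 3 * (1 + r * (2*w - 1)) * (1 + r * (2 * S - 1))) by nra.
    destruct (Rle_or_lt 1 (W + 2 * Z)); [lra|]. nra.
Qed.
From Coquelicot Require Import Coquelicot.
Open Scope R_scope.

Definition ff (a : R) : R := Rpower (sin a) p0.
Definition dff (a : R) : R := p0 * cos a * Rpower (sin a) (p0 - 1).

Lemma ff_deriv (a : R) : 0 < sin a -> is_derive ff a (dff a).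
Proof.
  intros H. unfold ff, dff.
  evar (d : R). assert (Hd : is_derive (fun a => Rpower (sin a) p0) a d).
  { unfold Rpower. auto_derive. exact H. unfold d. reflexivity. }
  unfold d in Hd. eapply is_derive_ext_loc in Hd. 2: { apply filter_forall. reflexivity. }
  replace (p0 * cos a * Rpower (sin a) (p0 - 1)) with
    (p0 * (1 * cos a * / sin a) * exp (p0 * ln (sin a))); [exact Hd|].
  unfold Rpower. replace ((p0 - 1) * ln (sin a)) with (p0 * ln (sin a) + - ln (sin a)) by ring.
  rewrite exp_plus, exp_Ropp, exp_ln by exact H. field. lra.
Qed.

Lemma ff_cont (a : R) : 0 < sin a -> continuity_pt ff a.
Proof.
  intros H. apply derivable_continuous_pt. exists (dff a).
  apply is_derive_Reals. now apply ff_deriv.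
Qed.

Lemma PI6_facts : 0 < PI / 6 < PI / 2.
Proof. pose proof PI_RGT_0. lra. Qed.

Lemma sin_pos_range (a : R) : 0 < a <= PI / 6 -> 0 < sin a.
Proof. intros H. pose proof PI_RGT_0. apply sin_gt_0; lra. Qed.

Lemma ff_mvt (a b : R) : 0 < a < b -> b <= PI / 6 ->
  exists c, a <= c <= b /\ ff b - ff a = dff c * (b - a).
Proof.
  intros Hab Hb. pose proof PI_RGT_0.
  destruct (MVT_gen ff a b dff) as [c [Hc E]].
  - intros x Hx. rewrite Rmin_left in Hx by lra. rewrite Rmax_right in Hx by lra.
    apply ff_deriv. apply sin_pos_range. lra.
  - intros x Hx. rewrite Rmin_left in Hx by lra. rewrite Rmax_right in Hx by lra.
    apply ff_cont. apply sin_pos_range. lra.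
  - rewrite Rmin_left in Hc by lra. rewrite Rmax_right in Hc by lra. exists c. tauto.
Qed.

Lemma dff_mono (a b : R) : 0 < a <= b -> b <= PI / 6 -> dff a <= dff b.
Proof.
  intros Hab Hb. pose proof PI_RGT_0. pose proof p0_bounds.
  assert (sa0 : 0 < sin a) by (apply sin_pos_range; lra).
  assert (sab : sin a <= sin b) by (apply sin_incr_1; lra).
  assert (sb2 : sin b <= 1/2) by (rewrite <- sin_PI6; apply sin_incr_1; lra).
  assert (ca0 : 0 < cos a) by (apply cos_gt_0; lra).
  assert (cb0 : 0 < cos b) by (apply cos_gt_0; lra).
  assert (ea := sin2_cos2 a). assert (eb := sin2_cos2 b). unfold Rsqr in ea, eb.
  set (t := sin b / sin a).
  assert (ts : t * sin a = sin b) by (unfold t; field; lra).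
  assert (t1 : 1 <= t) by nra.
  set (u := Rpower t (/2)).
  assert (u0 : 0 < u) by apply Rpower_pos'.
  assert (uu : u * u = t).
  { unfold u. rewrite <- Rpower_plus. replace (/2 + /2) with 1 by field. apply Rpower_1. lra. }
  assert (key : cos a * cos a * sin a <= cos b * cos b * sin b).
  { replace (cos a * cos a) with (1 - sin a * sin a) by lra.
    replace (cos b * cos b) with (1 - sin b * sin b) by lra.
    assert (0 <= (sin b - sin a) * (1 - sin a * sin a - sin a * sin b - sin b * sin b))
      by (apply Rmult_le_pos; nra). nra. }
  assert (cau : cos a <= cos b * u).
  { assert (cos a * cos a <= (cos b * u) * (cos b * u)).
    { replace ((cos b * u) * (cos b * u)) with (cos b * cos b * t) by (rewrite <- uu; ring).
      apply Rmult_le_reg_r with (sin a); [lra|].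
      replace (cos b * cos b * t * sin a) with (cos b * cos b * sin b) by (rewrite <- ts; ring). nra. }
    assert (0 < cos b * u) by (apply Rmult_lt_0_compat; lra).
    destruct (Rle_or_lt (cos a) (cos b * u)) as [hh|hh]; [exact hh|nra]. }
  assert (tu : u <= Rpower t (p0 - 1)) by (apply Rle_Rpower; lra).
  assert (spl : Rpower (sin b) (p0 - 1) = Rpower t (p0 - 1) * Rpower (sin a) (p0 - 1)).
  { rewrite Rpower_mult_distr by (unfold t; try apply Rdiv_lt_0_compat; lra).
    f_equal. unfold t. field. lra. }
  unfold dff. rewrite spl.
  assert (P := Rpower_pos' (sin a) (p0 - 1)).
  assert (cos a * Rpower (sin a) (p0 - 1) <= cos b * Rpower t (p0 - 1) * Rpower (sin a) (p0 - 1)).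
  { apply Rmult_le_compat_r; [lra|]. nra. }
  nra.
Qed.

Lemma ff_jensen (a b : R) : 0 < a <= b -> b <= PI / 6 -> 2 * ff ((a + b) / 2) <= ff a + ff b.
Proof.
  intros Hab Hb. destruct (Req_dec a b) as [E|E].
  - subst. replace ((b + b) / 2) with b by field. lra.
  - set (m := (a + b) / 2).
    destruct (ff_mvt a m) as [c1 [Hc1 E1]]; [unfold m; lra|unfold m; lra|].
    destruct (ff_mvt m b) as [c2 [Hc2 E2]]; [unfold m; lra|lra|].
    assert (dff c1 <= dff c2) by (apply dff_mono; unfold m in *; lra).
    assert (m - a = b - m) by (unfold m; field).
    assert (0 < m - a) by (unfold m; lra).
    nra.
Qed.

Lemma ff_slope (u v : R) : 0 < u <= v -> v <= PI / 6 ->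
  (ff (PI/6) - ff u) * (PI/6 - v) <= (ff (PI/6) - ff v) * (PI/6 - u).
Proof.
  intros Huv Hv. set (s := PI/6).
  destruct (Req_dec u v) as [E|E]; [subst; lra|].
  destruct (Req_dec v s) as [E'|E']; [rewrite E'; lra|].
  destruct (ff_mvt u v) as [c1 [Hc1 E1]]; [lra|lra|].
  destruct (ff_mvt v s) as [c2 [Hc2 E2]]; [unfold s in *; lra|unfold s; lra|].
  assert (dff c1 <= dff c2) by (apply dff_mono; unfold s in *; lra).
  assert (0 <= (v - u) * (s - v)) by (unfold s in *; nra).
  fold s in Hv.
  replace (ff s - ff u) with ((ff s - ff v) + (ff v - ff u)) by ring.
  rewrite E1. rewrite E2. nra.
Qed.

Lemma ff_s : ff (PI / 6) = 1 / 3.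
Proof. unfold ff. rewrite sin_PI6. apply Rpower_half_p0. Qed.

Lemma F2ang (y : R) : 0 < y <= PI / 6 -> ff (PI / 2 - 2 * y) + 2 * ff y >= 1.
Proof.
  intros Hy. pose proof PI_RGT_0.
  unfold ff. rewrite sin_shift, cos_2a_sin.
  apply F2poly. split.
  - apply sin_pos_range; lra.
  - rewrite <- sin_PI6. apply sin_incr_1; lra.
Qed.

Lemma two_small (a b c : R) : 0 < a -> 0 < b -> 0 < c -> a + b + c = PI / 2 ->
  b <= PI / 6 -> c <= PI / 6 -> ff a + ff b + ff c >= 1.
Proof.
  intros Ha Hb Hc Hs Hb6 Hc6.
  set (y := (b + c) / 2).
  assert (Ea : a = PI / 2 - 2 * y) by (unfold y; lra).
  assert (J : 2 * ff y <= ff b + ff c).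
  { destruct (Rle_or_lt b c).
    - apply ff_jensen; lra.
    - unfold y. replace (b + c) with (c + b) by ring. rewrite (Rplus_comm (ff b)). apply ff_jensen; lra. }
  assert (F := F2ang y ltac:(unfold y; lra)). rewrite <- Ea in F. lra.
Qed.

Lemma one_small (a b c : R) : 0 < a -> 0 < b -> 0 < c -> a + b + c = PI / 2 ->
  PI / 6 < a -> PI / 6 < b -> c <= PI / 6 -> ff a + ff b + ff c >= 1.
Proof.
  intros Ha Hb Hc Hs Ha6 Hb6 Hc6. pose proof PI_RGT_0.
  set (s := PI / 6). fold s in Ha6, Hb6, Hc6.
  set (y1 := (b + c) / 2). set (y2 := (a + c) / 2).
  assert (F1 := F2ang y1 ltac:(unfold y1, s in *; lra)).
  assert (F2 := F2ang y2 ltac:(unfold y2, s in *; lra)).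
  replace (PI / 2 - 2 * y1) with a in F1 by (unfold y1; lra).
  replace (PI / 2 - 2 * y2) with b in F2 by (unfold y2; lra).
  assert (S1 := ff_slope c y1 ltac:(unfold y1; lra) ltac:(unfold y1, s in *; lra)).
  assert (S2 := ff_slope c y2 ltac:(unfold y2; lra) ltac:(unfold y2, s in *; lra)).
  fold s in S1, S2. assert (fs : ff s = 1/3) by apply ff_s.
  rewrite fs in S1, S2.
  assert (cs : c < s) by (unfold s in *; lra).
  assert (E : 2 * (s - y1) + 2 * (s - y2) = s - c) by (unfold y1, y2, s in *; lra).
  assert (K : (s - c) * (ff a + ff b + ff c - 1) >= 0).
  { assert ((s - c) * (ff a + ff b + ff c - 1) >= (s - c) * (-(1/3 - ff c) + 2 * (1/3 - ff y1) + 2 * (1/3 - ff y2))).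
    { apply Rmult_ge_compat_l; lra. }
    nra. }
  destruct (Rle_or_lt 1 (ff a + ff b + ff c)); [lra|]. nra.
Qed.

Lemma sym3 (a b c : R) : 0 < a -> 0 < b -> 0 < c -> a + b + c = PI / 2 ->
  ff a + ff b + ff c >= 1.
Proof.
  intros Ha Hb Hc Hs.
  destruct (Rle_or_lt a (PI/6)) as [A|A]; destruct (Rle_or_lt b (PI/6)) as [B|B];
    destruct (Rle_or_lt c (PI/6)) as [C|C].
  - apply two_small; lra.
  - replace (ff a + ff b + ff c) with (ff c + ff a + ff b) by ring. apply two_small; lra.
  - replace (ff a + ff b + ff c) with (ff b + ff a + ff c) by ring. apply two_small; lra.
  - replace (ff a + ff b + ff c) with (ff b + ff c + ff a) by ring. apply one_small; lra.
  - apply two_small; lra.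
  - replace (ff a + ff b + ff c) with (ff a + ff c + ff b) by ring. apply one_small; lra.
  - apply one_small; lra.
  - lra.
Qed.

Lemma chord (X m q : R) : 0 < m <= X -> X <= 1 -> 0 <= q <= 1 ->
  (X - m) + (1 - X) * Rpower m q <= (1 - m) * Rpower X q.
Proof.
  intros Hm HX Hq. set (gX := Rpower X q).
  assert (g0 : 0 < gX) by apply Rpower_pos'.
  assert (B1 := bern_rev (1 / X) q ltac:(apply Rdiv_lt_0_compat; lra) Hq).
  assert (B2 := bern_rev (m / X) q ltac:(apply Rdiv_lt_0_compat; lra) Hq).
  assert (E1 : Rpower (1 / X) q * gX = 1).
  { unfold gX. rewrite Rpower_mult_distr by (try apply Rdiv_lt_0_compat; lra).
    replace (1 / X * X) with 1 by (field; lra). apply Rpower_base1. }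
  assert (E2 : Rpower (m / X) q * gX = Rpower m q).
  { unfold gX. rewrite Rpower_mult_distr by (try apply Rdiv_lt_0_compat; lra).
    f_equal. field. lra. }
  assert (I1 : 1 <= gX * (1 + q * (1 / X - 1))).
  { apply Rle_trans with (Rpower (1/X) q * gX); [lra|].
    rewrite (Rmult_comm gX). apply Rmult_le_compat_r; lra. }
  assert (I2 : Rpower m q <= gX * (1 + q * (m / X - 1))).
  { apply Rle_trans with (Rpower (m/X) q * gX); [lra|].
    rewrite (Rmult_comm gX). apply Rmult_le_compat_r; lra. }
  assert (Id : (X - m) * (1 + q * (1 / X - 1)) + (1 - X) * (1 + q * (m / X - 1)) = 1 - m)
    by (field; lra).
  assert (J1 : (X - m) * 1 <= (X - m) * (gX * (1 + q * (1 / X - 1)))) by (apply Rmult_le_compat_l; lra).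
  assert (J2 : (1 - X) * Rpower m q <= (1 - X) * (gX * (1 + q * (m / X - 1)))) by (apply Rmult_le_compat_l; lra).
  rewrite <- Id. nra.
Qed.

Lemma pair_major (X Y m q : R) : 0 < m <= X -> X <= 1 -> m <= Y -> Y <= 1 -> m < 1 ->
  1 + m <= X + Y -> 0 <= q <= 1 ->
  1 + Rpower m q <= Rpower X q + Rpower Y q.
Proof.
  intros. assert (CX := chord X m q ltac:(lra) ltac:(lra) ltac:(lra)).
  assert (CY := chord Y m q ltac:(lra) ltac:(lra) ltac:(lra)).
  assert (gm1 : Rpower m q <= 1).
  { rewrite <- (Rpower_base1 q). unfold Rpower. apply exp_le_mono.
    rewrite ln_1. assert (ln m <= 0) by (rewrite <- ln_1; apply ln_le'; lra). nra. }
  assert (0 <= (X + Y - 1 - m) * (1 - Rpower m q)) by (apply Rmult_le_pos; lra).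
  assert ((1 - m) * (1 + Rpower m q) <= (1 - m) * (Rpower X q + Rpower Y q)) by nra.
  apply Rmult_le_reg_l with (1 - m); lra.
Qed.

Lemma Rpower_sq_half (A p : R) : 0 < A -> Rpower A p = Rpower (A ^ 2) (p / 2).
Proof. intros H. rewrite <- Rpower_sq by exact H. rewrite Rpower_mult. f_equal. field. Qed.

Lemma cos_abs_le1 (x : R) : Rabs (cos x) <= 1.
Proof. pose proof (COS_bound x). unfold Rabs; destruct (Rcase_abs (cos x)); lra. Qed.

Lemma ti_facts (rho theta : R) : 0 < rho -> rho < PI / 6 -> theta2 rho <= theta <= PI ->
  let A := Rabs (cos (theta - theta2 rho)) in let B := Rabs (cos (theta - theta1)) in
  sin rho <= A /\ sin rho <= B /\ A <= 1 /\ B <= 1 /\ 1 + sin rho ^ 2 <= A ^ 2 + B ^ 2.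
Proof.
  intros H0 H1 Ht A B. pose proof PI_RGT_0. unfold theta2, theta1 in *.
  set (phi := theta - PI / 2).
  assert (Ea : cos (theta - (PI / 2 + rho)) = cos (phi - rho)) by (f_equal; unfold phi; ring).
  assert (Eb : cos (theta - 0) = - sin phi).
  { replace (theta - 0) with (phi + PI / 2) by (unfold phi; ring). rewrite cos_plus, cos_PI2, sin_PI2. ring. }
  assert (sr0 : 0 < sin rho) by (apply sin_gt_0; lra).
  assert (ca : sin rho <= cos (phi - rho)).
  { rewrite <- cos_shift. apply cos_decr_1; unfold phi in *; lra. }
  assert (sb : sin rho <= sin phi) by (apply sin_incr_1; unfold phi in *; lra).
  assert (EA : A = cos (phi - rho)) by (unfold A; rewrite Ea; apply Rabs_right; lra).
  assert (EB : B = sin phi) by (unfold B; rewrite Eb, Rabs_Ropp; apply Rabs_right; lra).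
  split; [lra|]. split; [lra|]. split; [apply cos_abs_le1|]. split; [apply cos_abs_le1|].
  rewrite EA, EB. rewrite cos_minus.
  assert (c1 : 0 <= cos phi) by (apply cos_ge_0; unfold phi in *; lra).
  assert (cr : 0 < cos rho) by (apply cos_gt_0; lra).
  assert (d : 0 <= sin (phi - rho)) by (apply sin_ge_0; unfold phi in *; lra).
  rewrite sin_minus in d.
  assert (e1 := sin2_cos2 phi). assert (e2 := sin2_cos2 rho). unfold Rsqr in e1, e2.
  assert (0 <= cos phi * sin rho * (sin phi * cos rho - cos phi * sin rho)) by
    (apply Rmult_le_pos; [apply Rmult_le_pos|]; lra).
  nra.
Qed.

Lemma part_a (rho p theta : R) : 0 < rho -> rho < PI / 6 -> 0 < p <= 2 ->
  theta2 rho <= theta <= PI -> Deltap rho p theta >= 1.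
Proof.
  intros H0 H1 Hp Ht. pose proof PI_RGT_0.
  destruct (ti_facts rho theta H0 H1 Ht) as [a1 [b1 [a2 [b2 s]]]].
  assert (sr0 : 0 < sin rho) by (apply sin_gt_0; lra).
  unfold Deltap. set (A := Rabs (cos (theta - theta2 rho))) in *. set (B := Rabs (cos (theta - theta1))) in *.
  rewrite !rpow_pos by lra.
  assert (RA : A ^ 2 <= Rpower A p) by (rewrite <- Rpower_sq by lra; apply Rpower_le_exp; lra).
  assert (RB : B ^ 2 <= Rpower B p) by (rewrite <- Rpower_sq by lra; apply Rpower_le_exp; lra).
  nra.
Qed.

Lemma ti_bound (rho p theta : R) : 0 < rho -> rho < PI / 6 -> 0 < p <= 2 ->
  theta2 rho <= theta <= PI -> Deltap rho p theta >= 1 + Rpower (sin rho) p.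
Proof.
  intros H0 H1 Hp Ht. pose proof PI_RGT_0.
  destruct (ti_facts rho theta H0 H1 Ht) as [a1 [b1 [a2 [b2 s]]]].
  assert (sr0 : 0 < sin rho) by (apply sin_gt_0; lra).
  assert (sr1 : sin rho < 1).
  { assert (hs6 : sin rho <= sin (PI / 6)) by (apply sin_incr_1; lra). rewrite sin_PI6 in hs6. lra. }
  unfold Deltap. set (A := Rabs (cos (theta - theta2 rho))) in *. set (B := Rabs (cos (theta - theta1))) in *.
  rewrite !rpow_pos by lra.
  rewrite (Rpower_sq_half A), (Rpower_sq_half B), (Rpower_sq_half (sin rho)) by lra.
  assert (1 + Rpower (sin rho ^ 2) (p / 2) <= Rpower (A ^ 2) (p / 2) + Rpower (B ^ 2) (p / 2)).
  { apply pair_major; try nra. }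
  lra.
Qed.

Lemma tj_bound (rho p tj : R) : 0 < rho -> rho < PI / 6 -> 0 < p <= p0 ->
  2 * rho <= tj <= PI / 2 - rho -> Deltap rho p tj + Rpower (sin rho) p >= 1.
Proof.
  intros H0 H1 Hp Ht. pose proof PI_RGT_0.
  set (a := tj - rho). set (b := PI / 2 - tj).
  assert (Ea : Rabs (cos (tj - theta2 rho)) = sin a).
  { unfold theta2, a. replace (tj - (PI / 2 + rho)) with (- (PI / 2 - (tj - rho))) by ring.
    rewrite cos_neg, cos_shift. apply Rabs_right. left. apply sin_gt_0; lra. }
  assert (Eb : Rabs (cos (tj - theta1)) = sin b).
  { unfold theta1, b. rewrite Rminus_0_r, <- sin_shift. apply Rabs_right. left. apply sin_gt_0; lra. }
  assert (low : forall x, 0 < x < PI -> ff x <= Rpower (sin x) p).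
  { intros x Hx. unfold ff. apply Rpower_le_exp; [|lra]. split; [apply sin_gt_0; lra|apply SIN_bound]. }
  unfold Deltap. rewrite Ea, Eb.
  rewrite !rpow_pos by (apply sin_gt_0; unfold a, b; lra).
  assert (S := sym3 a b rho ltac:(unfold a; lra) ltac:(unfold b; lra) H0 ltac:(unfold a, b; ring)).
  assert (la := low a ltac:(unfold a; lra)). assert (lb := low b ltac:(unfold b; lra)).
  assert (lr := low rho ltac:(lra)). lra.
Qed.

Theorem lemma2p10 (rho : R) (hrho0 : 0 < rho) (hrho1 : rho < PI / 6) :
  (forall p theta, 0 < p <= 2 ->
     theta2 rho <= theta <= PI -> Deltap rho p theta >= 1) /\
  (forall p ti tj, 0 < p <= ln 3 / ln 2 ->
     theta2 rho <= ti <= PI -> 2 * rho <= tj <= PI / 2 - rho ->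
     Deltap rho p ti + Deltap rho p tj >= 2).
Proof.
  split.
  - intros p theta Hp Ht. now apply part_a.
  - intros p ti tj Hp Hi Hj. pose proof p0_bounds.
    assert (Hp' : 0 < p <= p0) by (unfold p0; lra).
    assert (I := ti_bound rho p ti hrho0 hrho1 ltac:(lra) Hi).
    assert (J := tj_bound rho p tj hrho0 hrho1 Hp' Hj).
    lra.
Qed.
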